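(* Let $k_p, k_s, n_s$ be positive integers with $n_s \ge k_s$, and let $\epsilon_s \in [0,1)$. Define \[ \epsilon_p = \Pr\bigl(S < k_s\bigr), \qquad S \sim \mathrm{Binomial}(n_s, 1-\epsilon_s), \] i.e. $\epsilon_p = \sum_{j=n_s-k_s+1}^{n_s}\binom{n_s}{j}\epsilon_s^{\,j}(1-\epsilon_s)^{n_s-j}$. Let \[ \mathbb{E}\bigl[T^{\mathrm{IIR}}\bigr] = \frac{k_p\, k_s}{1-\epsilon_s}, \qquad \mathbb{E}\bigl[T^{\mathrm{FR}}\bigr] = \frac{k_p\, n_s}{1-\epsilon_p}. \] Then $\mathbb{E}\bigl[T^{\mathrm{FR}}\bigr] \ge \mathbb{E}\bigl[T^{\mathrm{IIR}}\bigr]$.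
   Context: Point-to-point transmission model: a chunk consists of $k_p$ packets, each consisting of $k_s$ symbols. The physical channel is a memoryless symbol erasure channel that erases each transmitted symbol independently with probability $\epsilon_s$. A packet can be decoded once any $k_s$ of its transmitted coded symbols are received, and a chunk once any $k_p$ of its coded packets are received. In the Infinite Incremental Redundancy (IIR) scheme, coded symbols of a packet are sent until $k_s$ are received (no packet erasures). The number of channel uses $T^{\mathrm{IIR}}$ to decode the chunk is then negative binomial with parameters $(k_p k_s, 1-\epsilon_s)$, so its mean is $k_p k_s/(1-\epsilon_s)$. In the Fixed Redundancy (FR) scheme, each packet is sent using exactly $n_s$ coded symbols and is erased with probability $\epsilon_p$ (the probability that fewer than $k_s$ of the $n_s$ symbols are received). Coded packets are sent ratelessly until $k_p$ packets are received. The number of channel uses $T^{\mathrm{FR}}$ therefore has mean $k_p n_s/(1-\epsilon_p)$. Note that $\epsilon_p<1$ because $\epsilon_s<1$. *)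

(* Defs.v *)
From mathcomp Require Import all_boot all_order all_algebra.
Set Implicit Arguments. Unset Strict Implicit. Unset Printing Implicit Defensive.
Import Order.TTheory GRing.Theory Num.Theory.
Local Open Scope ring_scope.

Definition eps_p {R : realFieldType} (n_s k_s : nat) (eps_s : R) : R :=
  \sum_((n_s - k_s).+1 <= j < n_s.+1)
     ('C(n_s, j))%:R * eps_s ^+ j * (1 - eps_s) ^+ (n_s - j).

Definition ET_IIR {R : realFieldType} (k_p k_s : nat) (eps_s : R) : R :=
  (k_p * k_s)%:R / (1 - eps_s).

Definition ET_FR {R : realFieldType} (k_p k_s n_s : nat) (eps_s : R) : R :=
  (k_p * n_s)%:R / (1 - eps_p n_s k_s eps_s).

(* Main.v *)
Require Import Defs.
From mathcomp Require Import all_boot all_order all_algebra.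
From mathcomp Require Import ring zify.
Import Order.TTheory GRing.Theory Num.Theory.
Local Open Scope ring_scope.

Lemma binsum1 (R : realFieldType) (n : nat) (e : R) :
  \sum_(0 <= j < n.+1) ('C(n, j))%:R * e ^+ j * (1 - e) ^+ (n - j) = 1.
Proof.
transitivity ((1 - e + e) ^+ n); last by rewrite subrK expr1n.
rewrite exprDn big_mkord; apply: eq_bigr => i _.
by rewrite -mulr_natl; ring.
Qed.

Lemma binsum_mean (R : realFieldType) (n : nat) (e : R) :
  \sum_(0 <= j < n.+1) (n - j)%:R * (('C(n, j))%:R * e ^+ j * (1 - e) ^+ (n - j))
  = n%:R * (1 - e).
Proof.
case: n => [|m]; first by rewrite big_nat1 subnn !mul0r.
rewrite big_nat_recr //= subnn mul0r addr0.
transitivity ((m.+1)%:R * (1 - e) *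
  \sum_(0 <= j < m.+1) ('C(m, j))%:R * e ^+ j * (1 - e) ^+ (m - j)); last first.
  by rewrite binsum1 mulr1.
rewrite mulr_sumr !big_mkord; apply: eq_bigr => i _.
have him : (i <= m)%N by rewrite -ltnS.
have H : ((m - i).+1)%:R * ('C(m.+1, i))%:R = (m.+1)%:R * ('C(m, i))%:R :> R.
  by rewrite -subSn // -!natrM -mul_bin_down.
rewrite subSn // exprS.
transitivity ((m - i).+1%:R * ('C(m.+1, i))%:R * (e ^+ i * (1 - e) ^+ (m - i) * (1 - e))); first ring.
rewrite H; ring.
Qed.

Theorem theorem1 (R : realFieldType) (k_p k_s n_s : nat) (eps_s : R) :
  (0 < k_p)%N -> (0 < k_s)%N -> (0 < n_s)%N -> (k_s <= n_s)%N ->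
  0 <= eps_s -> eps_s < 1 ->
  ET_IIR k_p k_s eps_s <= ET_FR k_p k_s n_s eps_s.
Proof.
move=> hkp hks hns hkn he0 he1.
set F := fun j => ('C(n_s, j))%:R * eps_s ^+ j * (1 - eps_s) ^+ (n_s - j).
have hf : 0 < 1 - eps_s by rewrite subr_gt0.
have F0 : forall j, 0 <= F j.
  by move=> j; rewrite /F !mulr_ge0 ?exprn_ge0 ?ler0n // ltW.
set s := (n_s - k_s)%N.
have hs : (s.+1 <= n_s.+1)%N by rewrite ltnS leq_subr.
set A := \sum_(0 <= j < s.+1) F j.
have HA : 1 - eps_p n_s k_s eps_s = A.
  rewrite -(binsum1 _ n_s eps_s) (@big_cat_nat _ _ _ s.+1) // /= /eps_p.
  by rewrite addrK.
have Apos : 0 < A.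
  rewrite /A big_nat_recl //.
  apply: ltr_wpDr; first by apply: sumr_ge0 => i _; exact: F0.
  rewrite /F /= bin0 subn0 expr0 mulr1 mul1r; exact: exprn_gt0.
have key : k_s%:R * A <= n_s%:R * (1 - eps_s).
  rewrite -(binsum_mean _ n_s eps_s).
  rewrite (@big_cat_nat _ _ _ s.+1) // /=.
  apply: ler_wpDr.
    apply: sumr_ge0 => i _; apply: mulr_ge0; [exact: ler0n| exact: F0].
  rewrite /A mulr_sumr.
  apply: ler_sum_nat => i /andP [_ hi].
  apply: ler_wpM2r; first exact: F0.
  rewrite ler_nat; move: hi; rewrite /s; lia.
rewrite /ET_IIR /ET_FR HA.
rewrite ler_pdivlMr // mulrAC ler_pdivrMr //.
rewrite !natrM -!mulrA; apply: ler_wpM2l; first exact: ler0n.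
exact: key.
Qed.
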